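(* Let $\mathcal S$ be an aperiodic primitive qubit spin substitution in $\mathbb Z^m$ given by $(Q,\mathcal D,G,W)$. There is a unitary matrix $V$, independent of $\vec k$, such that for all $\vec k\in\mathbb R^m$ $$V^{*}B(\vec k)V=\bigoplus_{\chi\in\widehat G}B_\chi(\vec k).$$ Moreover, if $\mathcal S$ is $\chi$-unitary, then $B_\chi(\vec k)=\sqrt{|\det Q|}\,U(\vec k)$ with $U(\vec k)$ unitary, and consequently the Lyapunov exponent of the cocycle generated by $B_\chi$ satisfies $\lambda^{B_\chi}(\vec k)=\log\sqrt{|\det Q|}$ for all $\vec k\in\mathbb R^m$.
   Context: $Q$ is an expansive endomorphism of $\mathbb Z^m$ and $\mathcal D$ a complete set of coset representatives of $\mathbb Z^m/Q\mathbb Z^m$ (so $|\mathcal D|=|\det Q|$). Spin substitution: finite abelian group $G$, $W:\mathcal D\times\mathcal D\to G$, alphabet $\mathcal A=G\times\mathcal D$ with letters $g\mathsf d$, $\mathcal S(g\mathsf d,\vec d')=(gW(\vec d,\vec d'))\mathsf d'$; primitive = substitution matrix has a positive power; aperiodic = no configuration of the (nonempty) generated subshift has a nonzero period. Fourier matrix: the $\mathcal A\times\mathcal A$ matrix $B(\vec k)_{\mathsf a\mathsf b}=\sum_{\vec x\in T_{\mathsf a\mathsf b}}e^{2\pi i\langle\vec k,\vec x\rangle}$ with $T_{\mathsf a\mathsf b}=\{\vec x\in\mathcal D:\mathcal S(\mathsf b,\vec x)=\mathsf a\}$. For $\chi\in\widehat G$, $B_\chi(\vec k)$ is the $\mathcal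 D\times\mathcal D$ matrix with entries $B_\chi(\vec k)_{\vec d,\vec d'}=e^{2\pi i\langle\vec k,\vec d\rangle}\chi(W(\vec d',\vec d))$. For a matrix function $A$, the cocycle is $A^{(n)}(\vec k)=A(\vec k)A(Q^T\vec k)\cdots A((Q^T)^{n-1}\vec k)$ and the (maximal) Lyapunov exponent is $\lambda^A(\vec k)=\limsup_{n\to\infty}\frac1n\log\|A^{(n)}(\vec k)\|$. $\mathcal S$ is $\chi$-unitary if $\frac{1}{\sqrt{|\mathcal D|}}(\chi(W(\vec d,\vec d')))$ is unitary. *)

(* Defs.v *)
From HB Require Import structures.
From mathcomp Require Import all_boot all_order all_algebra all_fingroup.
From mathcomp Require Import all_classical all_reals all_analysis.
From mathcomp Require Import complex.
Set Implicit Arguments. Unset Strict Implicit. Unset Printing Implicit Defensive.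
Import Order.TTheory GRing.Theory Num.Theory.
Local Open Scope ring_scope.

Section FinMat.
Variable R : realType.
Local Notation C := (R[i]).

Definition cconj (z : C) : C := let: Complex a b := z in Complex a (- b).
Definition cnorm (z : C) : R := let: Complex a b := z in Num.sqrt (a ^+ 2 + b ^+ 2).

Definition fmul (I J K : finType) (A : I -> J -> C) (B : J -> K -> C) : I -> K -> C :=
  fun i k => \sum_(j : J) A i j * B j k.
Definition fadj (I J : finType) (A : I -> J -> C) : J -> I -> C :=
  fun j i => cconj (A i j).
Definition fid (I : finType) : I -> I -> C := fun i j => if i == j then 1 else 0.
Definition fscale (I J : finType) (c : C) (A : I -> J -> C) : I -> J -> C :=
  fun i j => c * A i j.

Definition funitary (I J : finType) (V : I -> J -> C) : Prop :=
  (forall j j', fmul (fadj V) V j j' = fid j j') /\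
  (forall i i', fmul V (fadj V) i i' = fid i i').

Definition fdirect_sum (X D : finType) (Bs : X -> D -> D -> C) :
  (X * D)%type -> (X * D)%type -> C :=
  fun p q => if p.1 == q.1 then Bs p.1 p.2 q.2 else 0.

Definition vnorm (I : finType) (v : I -> C) : R :=
  Num.sqrt (\sum_(i : I) cnorm (v i) ^+ 2).
Definition opnorm (I : finType) (A : I -> I -> C) : R :=
  sup [set r : R | exists v : I -> C,
         vnorm v = 1 /\ r = vnorm (fun i => \sum_(j : I) A i j * v j)].
End FinMat.

Definition zvec (m : nat) := 'cV[int]_m.

Definition pairing (R : realType) (m : nat) (k : 'cV[R]_m) (x : zvec m) : R :=
  \sum_(i < m) k i 0 * (x i 0)%:~R.

Definition expi2pi (R : realType) (t : R) : R[i] :=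
  Complex (cos (2 * pi * t)) (sin (2 * pi * t)).

Definition QTact (R : realType) (m : nat) (Q : 'M[int]_m) (k : 'cV[R]_m) : 'cV[R]_m :=
  (map_mx (fun z : int => z%:~R) Q)^T *m k.

Definition expansive (R : realType) (m : nat) (Q : 'M[int]_m) : Prop :=
  forall z : R[i], root (char_poly (map_mx (fun x : int => x%:~R) Q)) z ->
    1 < cnorm z.

(* dv : D -> Z^m enumerates a complete set of coset representatives of
   Z^m / Q Z^m (each coset contains exactly one dv d) *)
Definition complete_residues (m : nat) (Q : 'M[int]_m) (D : finType)
  (dv : D -> zvec m) : Prop :=
  (forall x : zvec m, exists d : D, exists y : zvec m, x = dv d + Q *m y) /\
  (forall (d d' : D) (y y' : zvec m), dv d + Q *m y = dv d' + Q *m y' -> d = d').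

(* Spin substitutions. Alphabet A = G * D ; letter (g, d) is "g d".     *)
Section Spin.
Variables (gT : finGroupType) (D : finType) (W : D -> D -> gT).

Definition spin_letter := (gT * D)%type.

Definition spin_sub (a : spin_letter) (d' : D) : spin_letter :=
  ((a.1 * W a.2 d')%g, d').

Definition sub_matrix (a b : spin_letter) : nat := #|[set x : D | spin_sub b x == a]|.

Fixpoint nat_mpow (n : nat) : spin_letter -> spin_letter -> nat :=
  match n with
  | 0 => fun a b => (a == b : nat)
  | n'.+1 => fun a c => (\sum_(b : spin_letter) sub_matrix a b * nat_mpow n' b c)%N
  end.

Definition primitive_sub : Prop :=
  exists n, (0 < n)%N /\ forall a b, (0 < nat_mpow n a b)%N.

Variables (m : nat) (Q : 'M[int]_m) (dv : D -> zvec m).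

(* occurs n a x b : the n-th iterate S^n(a) (a patch placed with a at the
   origin for n = 0) carries the letter b at position x *)
Inductive occurs : nat -> spin_letter -> zvec m -> spin_letter -> Prop :=
  | occurs0 a : occurs 0 a 0 a
  | occursS n a y b d : occurs n a y b ->
      occurs n.+1 a (Q *m y + dv d) (spin_sub b d).

(* the subshift generated by S: configurations all of whose finite
   patches are (translates of) subpatches of some S^n(a) *)
Definition in_subshift (w : zvec m -> spin_letter) : Prop :=
  forall F : seq (zvec m), exists n a, exists t : zvec m,
    forall x, x \in F -> occurs n a (x + t) (w x).

Definition aperiodic_sub : Prop :=
  forall w, in_subshift w ->
    forall p : zvec m, p != 0 -> ~ (forall x, w (x + p) = w x).

Definition fourier_matrix (R : realType) (k : 'cV[R]_m) :
  spin_letter -> spin_letter -> R[i] :=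
  fun a b => \sum_(x : D | spin_sub b x == a) expi2pi (pairing k (dv x)).

Definition is_character (R : realType) (chi : gT -> R[i]) : Prop :=
  chi 1%g = 1 /\ forall g h, chi (g * h)%g = chi g * chi h.

Definition B_chi (R : realType) (chi : gT -> R[i]) (k : 'cV[R]_m) : D -> D -> R[i] :=
  fun d d' => expi2pi (pairing k (dv d)) * chi (W d' d).

Definition chi_unitary (R : realType) (chi : gT -> R[i]) : Prop :=
  funitary (fun d d' : D => ((Num.sqrt (#|D|%:R : R))^-1)%:C%C * chi (W d d')).
End Spin.

Fixpoint cocycle (R : realType) (m : nat) (Q : 'M[int]_m) (D : finType)
  (A : 'cV[R]_m -> D -> D -> R[i]) (n : nat) (k : 'cV[R]_m) : D -> D -> R[i] :=
  match n with
  | 0 => @fid R D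
  | n'.+1 => fmul (A k) (cocycle Q A n' (QTact Q k))
  end.

Definition lyapunov (R : realType) (m : nat) (Q : 'M[int]_m) (D : finType)
  (A : 'cV[R]_m -> D -> D -> R[i]) (k : 'cV[R]_m) : \bar R :=
  limn_esup (fun n : nat => ((n%:R)^-1 * ln (opnorm (cocycle Q A n k)))%:E).

(* Main.v *)
Require Import Defs.
From HB Require Import structures.
From mathcomp Require Import all_boot all_order all_algebra all_fingroup.
From mathcomp Require Import all_classical all_reals all_analysis.
From mathcomp Require Import complex.
From mathcomp Require Import ring.
Import Order.TTheory GRing.Theory Num.Theory.
Local Open Scope ring_scope.

Lemma unit_int_abs (x : int) : x \is a GRing.unit -> `|x| = 1.
Proof. by rewrite unfold_in /= => /orP[] /eqP ->. Qed.

Lemma det_unit_abs n (L : 'M[int]_n) : L \in unitmx -> `|\det L| = 1.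
Proof. by rewrite unitmxE => /unit_int_abs. Qed.

Lemma modz_id (a d : int) : 0 <= a < `|d| -> (a %% d)%Z = a.
Proof. by move=> h; rewrite -modz_abs modz_small // abszE. Qed.

Lemma modz_inj (d a b z : int) : 0 <= a < `|d| -> 0 <= b < `|d| ->
  a - b = d * z -> a = b.
Proof.
move=> ha hb e.
have ea : a = z * d + b by rewrite mulrC -e subrK.
by rewrite -(modz_id _ _ ha) ea modzMDl modz_id.
Qed.


Lemma divz_helper (a a' dd : int) : (a %% dd = a' %% dd)%Z ->
  a - a' = dd * (divz a dd - divz a' dd).
Proof.
move=> hr; rewrite {1}(divz_eq a dd) {1}(divz_eq a' dd) hr; ring.
Qed.

Lemma card_residues m (Q : 'M[int]_m) (D : finType) (dv : D -> 'cV[int]_m) :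
  complete_residues Q dv -> #|D| = `|\det Q|%N.
Proof.
case=> ex uq.
case: (int_Smith_normal_form Q) => L uL [Rm uR [d _ EQ]].
set S := \matrix_(i, j) _ in EQ.
have Sz : forall (z : 'cV[int]_m) i, (S *m z) i 0 = d`_i * z i 0.
  move=> z i; rewrite mxE (bigD1 i) //= big1 ?addr0; first by rewrite mxE eqxx mulr1n.
  move=> j nij; rewrite mxE; case: eqP => [/ord_inj eji|_]; last by rewrite mulr0n mul0r.
  by rewrite eji eqxx in nij.
have key1 : forall (v v' y y' : 'cV[int]_m) e, L *m v = dv e + Q *m y ->
    L *m v' = dv e + Q *m y' -> v - v' = S *m (Rm *m (y - y')).
  move=> v v' y y' e h1 h2.
  have : L *m (v - v') = L *m (S *m (Rm *m (y - y'))).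
    by rewrite mulmxBr h1 h2 opprD addrACA subrr add0r -mulmxBr EQ !mulmxA.
  by move/(congr1 (mulmx (invmx L))); rewrite !mulKmx.
have key2 : forall (v w z : 'cV[int]_m), v - w = S *m z ->
    L *m v = L *m w + Q *m (invmx Rm *m z).
  move=> v w z h.
  rewrite EQ !mulmxA -(mulmxA _ Rm) mulmxV // mulmx1 -mulmxA -h mulmxBr.
  by rewrite addrC subrK.
pose b (i : 'I_m) := if d`_i == 0 then #|D|.+1 else absz d`_i.
pose BT := {dffun forall i : 'I_m, 'I_(b i)}.
pose vec (r : BT) : 'cV[int]_m := \col_i ((r i : nat)%:Z).
have [f hf] := @choice BT D (fun r e => exists y, L *m vec r = dv e + Q *m y)
  (fun r => ex (L *m vec r)).
have finj : injective f.
  move=> r r' efr.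
  have [y hy] := hf r; have [y' hy'] := hf r'.
  rewrite efr in hy.
  have := key1 _ _ _ _ _ hy hy'; set z := Rm *m _ => heq.
  apply/ffunP => i; apply: ord_inj.
  have := congr1 (fun M : 'cV[int]_m => M i 0) heq; rewrite Sz !mxE /=.
  case: (eqVneq d`_i 0) => [->|dnz].
    by rewrite mul0r => /eqP; rewrite subr_eq0 => /eqP [].
  have lt_eq : forall n k (x : 'I_n), n = k -> (x < k)%N by move=> n k x <-.
  have hb : b i = absz d`_i by rewrite /b (negbTE dnz).
  have hr := lt_eq _ _ (r i) hb; have hr' := lt_eq _ _ (r' i) hb.
  move=> /(modz_inj (d`_i)) h.
  suff: (r i : nat)%:Z = (r' i : nat)%:Z by case.
  by apply: h; rewrite /= -abszE ltz_nat ?hr ?hr'.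
have cardBT : #|BT| = (\prod_i b i)%N.
  by rewrite card_dep_ffun foldrE big_map big_enum /=; apply: eq_bigr => i _; rewrite card_ord.
have le1 : (\prod_i b i <= #|D|)%N by rewrite -cardBT; apply: leq_card finj.
have nz : forall i : 'I_m, d`_i != 0.
  move=> i; apply/negP => /eqP di0.
  have bpos : forall j, (0 < b j)%N.
    move=> j; rewrite /b; case: ifP => // /negbT; by rewrite absz_gt0.
  have : (b i <= \prod_i b i)%N.
    rewrite (bigD1 i) //=; apply: leq_pmulr; rewrite prodn_gt0 // => j; exact: bpos.
  by rewrite /b di0 eqxx => /leq_trans /(_ le1); rewrite ltnn.
pose w (e : D) := invmx L *m dv e.
have Hg : forall e i, (absz (modz (w e i 0)%R d`_i) < b i)%N.
  move=> e i; rewrite /b (negbTE (nz i)).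
  by rewrite -ltz_nat !abszE ger0_norm ?modz_ge0 ?ltz_mod ?nz.
pose g (e : D) : BT := finfun (fun i => Ordinal (Hg e i)).
have ginj : injective g.
  move=> e e' ege.
  pose z : 'cV[int]_m := \col_i (divz (w e i 0) d`_i - divz (w e' i 0) d`_i).
  have hz : w e - w e' = S *m z.
    apply/matrixP => i j; rewrite (ord1 j) Sz.
    have -> : (w e - w e') i 0 = w e i 0 - w e' i 0 by rewrite !mxE.
    rewrite [z _ _]mxE.
    have := congr1 (fun r : BT => (r i : nat)) ege; rewrite !ffunE /=.
    move=> /(congr1 (fun n : nat => n%:Z)); rewrite !abszE !ger0_norm ?modz_ge0 ?nz // => hr.
    exact: divz_helper.
  have := key2 _ _ _ hz; rewrite !mulKVmx // => h.
  apply: (uq e e' 0 (invmx Rm *m z)); by rewrite mulmx0 addr0.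
have le2 : (#|D| <= #|BT|)%N by apply: leq_card ginj.
rewrite cardBT in le2.
have -> : #|D| = (\prod_i b i)%N by apply/eqP; rewrite eqn_leq le1 le2.
have -> : (\prod_(i < m) b i = \prod_(i < m) absz (d`_i)%R)%N.
  by apply: eq_bigr => i _; rewrite /b (negbTE (nz i)).
rewrite EQ !det_mulmx !abszM.
have hL : `|\det L|%N = 1%N by apply/eqP; rewrite -eqz_nat abszE det_unit_abs.
have hR : `|\det Rm|%N = 1%N by apply/eqP; rewrite -eqz_nat abszE det_unit_abs.
rewrite hL hR mul1n muln1.
have -> : S = diag_mx (\row_i d`_i).
  by apply/matrixP => i j; rewrite !mxE.
rewrite det_diag.
rewrite (big_morph (fun x : int => `|x|%N) abszM (erefl : absz 1 = 1%N)).
by apply: eq_bigr => i _; rewrite mxE.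
Qed.


Lemma two_elem (gT : finGroupType) : #|gT| = 2%N ->
  exists s : gT, s != 1%g /\ (forall g, g = 1%g \/ g = s) /\ (s * s = 1)%g.
Proof.
move=> h.
have /cards2P [x [y [nxy hT]]] : #|[set: gT]| == 2%N by rewrite cardsT h.
have mem g : g = x \/ g = y.
  have : g \in [set: gT] by rewrite inE.
  by rewrite hT !inE => /orP [] /eqP; auto.
have ss (s : gT) : s != 1%g -> (forall g, g = 1%g \/ g = s) -> (s * s = 1)%g.
  move=> ns hg; case: (hg (s * s)%g) => // e.
  have e' : s = 1%g by apply: (mulgI s); rewrite mulg1 e.
  by rewrite e' eqxx in ns.
case: (mem 1%g) => e1.
  have ny : y != 1%g by rewrite e1 eq_sym.
  have hg g : g = 1%g \/ g = y by rewrite e1; apply: mem.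
  by exists y; split; [|split; [|apply: ss]].
have nx : x != 1%g by rewrite e1.
have hg g : g = 1%g \/ g = x by rewrite e1; case: (mem g); auto.
by exists x; split; [|split; [|apply: ss]].
Qed.

Section C.
Variable R : realType.
Local Notation C := (R[i]).

Lemma cconjE (z : C) : cconj z = conjc z. Proof. by case: z. Qed.

Lemma sum_pair (A B : finType) (F : (A * B)%type -> C) :
  \sum_p F p = \sum_a \sum_b F (a, b).
Proof. by rewrite (pair_bigA _ (fun a b => F (a, b))); apply: eq_bigr => -[a b]. Qed.

Lemma sum_delta (A : finType) (e : A) (F : A -> C) :
  \sum_x (if x == e then F x else 0) = F e.
Proof. by rewrite -big_mkcond big_pred1_eq. Qed.

Lemma fid_sym (I : finType) (i j : I) : fid R i j = fid R j i.
Proof. by rewrite /fid eq_sym. Qed.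

Lemma neg1_neq1 : (-1 : C) != 1.
Proof. by rewrite eq_sym -subr_eq0 opprK -(natrD C 1 1) pnatr_eq0. Qed.


Lemma sqrt_inv_sq (N : nat) : (0 < N)%N ->
  ((Num.sqrt (N%:R : R))^-1)%:C%C * ((Num.sqrt (N%:R : R))^-1)%:C%C = (N%:R : C)^-1.
Proof.
move=> N0; rewrite -rmorphM -invfM -expr2 sqr_sqrtr ?ler0n //.
by rewrite fmorphV rmorph_nat.
Qed.

Lemma cconj_real (x : R) : cconj (x%:C)%C = (x%:C)%C.
Proof. by rewrite cconjE conjc_real. Qed.

Lemma cconjM (x y : C) : cconj (x * y) = cconj x * cconj y.
Proof. by rewrite !cconjE rmorphM. Qed.

Lemma cconj_sum (I : finType) (F : I -> C) : cconj (\sum_i F i) = \sum_i cconj (F i).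
Proof. by rewrite cconjE rmorph_sum; apply: eq_bigr => i _; rewrite cconjE. Qed.

Lemma cconjK (x : C) : cconj (cconj x) = x.
Proof. by rewrite !cconjE conjcK. Qed.

Lemma sumL_if {A : finType} (x : A) (F G : A -> C) :
  \sum_e (if e == x then F e else 0) * G e = F x * G x.
Proof.
rewrite (bigD1 x) //= eqxx big1 ?addr0 // => e ne; by rewrite (negbTE ne) mul0r.
Qed.

Lemma sumL_if' {A : finType} (x : A) (F G : A -> C) :
  \sum_e (if x == e then F e else 0) * G e = F x * G x.
Proof.
rewrite (bigD1 x) //= eqxx big1 ?addr0 // => e ne; by rewrite eq_sym (negbTE ne) mul0r.
Qed.

Lemma sumR_if' {A : finType} (x : A) (F G : A -> C) :
  \sum_e G e * (if e == x then F e else 0) = G x * F x.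
Proof.
rewrite (bigD1 x) //= eqxx big1 ?addr0 // => e ne; by rewrite (negbTE ne) mulr0.
Qed.

Lemma sumR_if {A : finType} (x : A) (F G : A -> C) :
  \sum_e G e * (if x == e then F e else 0) = G x * F x.
Proof.
rewrite (bigD1 x) //= eqxx big1 ?addr0 // => e ne; by rewrite eq_sym (negbTE ne) mulr0.
Qed.

Section Part1.
Variables (gT : finGroupType) (s : gT).
Hypotheses (hs1 : s != 1%g) (hg : forall g, g = 1%g \/ g = s) (hss : (s * s = 1)%g).

Definition chis (b : bool) (g : gT) : C := if b && (g != 1%g) then -1 else 1.

Lemma sum_gT (F : gT -> C) : \sum_g F g = F 1%g + F s.
Proof.
rewrite (bigD1 1%g) //= (bigD1 s) //= ?big1 ?addr0 // 1?eq_sym //.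
by move=> g /andP [ng1 ngs]; case: (hg g) => e; [rewrite e eqxx in ng1 | rewrite e eqxx in ngs].
Qed.

Lemma chis_char b : is_character (chis b).
Proof.
split; first by rewrite /chis eqxx andbF.
move=> g h; case: (hg g) => ->; case: (hg h) => ->;
  rewrite ?mul1g ?mulg1 ?hss /chis; case: b; rewrite /= ?eqxx ?hs1 /= ?mulr1 ?mul1r ?mulrNN //.
all: by rewrite ?mulr1.
Qed.

Lemma chis_sq b g : chis b g * chis b g = 1.
Proof. by rewrite /chis; case: ifP; rewrite ?mulrNN mulr1. Qed.

Lemma chis_conj b g : cconj (chis b g) = chis b g.
Proof. by rewrite /chis; case: ifP => _; rewrite cconjE ?rmorphN rmorph1. Qed.

Lemma chis_orth b b' : \sum_g chis b g * chis b' g = if b == b' then 2 else 0.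
Proof.
rewrite sum_gT /chis eqxx !andbF /= hs1 mulr1.
by case: b; case: b' => /=; rewrite ?mulrNN ?mulr1 ?mul1r ?mulN1r ?subrr.
Qed.

Lemma chis_sum2 g g' : \sum_b chis b g * chis b g' = if g == g' then 2 else 0.
Proof.
rewrite big_bool /chis /=.
case: (hg g) => ->; case: (hg g') => ->; rewrite ?eqxx ?hs1 /= ?mulr1 ?mulrNN //.
- by rewrite eq_sym (negbTE hs1) mul1r addrC subrr.
- by rewrite (negbTE hs1) addNr.
all: by rewrite mul1r.
Qed.

Lemma chis_inj : injective chis.
Proof.
move=> b b' e; have := congr1 (fun f => f s) e; rewrite /chis hs1 => {e}.
by case: b; case: b' => //= /eqP; rewrite ?(negbTE neg1_neq1) // eq_sym (negbTE neg1_neq1).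
Qed.

Lemma chis_surj (chi : gT -> C) : is_character chi -> exists b, chis b = chi.
Proof.
case=> c1 cM.
have : chi s ^+ 2 == 1 by rewrite expr2 -cM hss c1.
rewrite sqrf_eq1 => /orP [] /eqP cs.
  by exists false; apply: funext => g; rewrite /chis /=; case: (hg g) => ->.
exists true; apply: funext => g; rewrite /chis /=; case: (hg g) => ->; by rewrite ?eqxx ?hs1.
Qed.

Variables (D : finType) (W : D -> D -> gT) (m : nat) (dv : D -> 'cV[int]_m).

Definition c2 : C := ((Num.sqrt (2%:R : R))^-1)%:C%C.
Definition Vm (p : (gT * D)%type) (q : (bool * D)%type) : C :=
  if p.2 == q.2 then c2 * chis q.1 p.1 else 0.

Lemma c2c2 : c2 * c2 = 2^-1.
Proof. exact: (sqrt_inv_sq 2). Qed.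

Lemma Vm_cconj p q : cconj (Vm p q) = Vm p q.
Proof.
rewrite /Vm; case: ifP => _; last by rewrite cconjE rmorph0.
by rewrite cconjM chis_conj /c2 cconj_real.
Qed.

Lemma Vm_unitary : funitary Vm.
Proof.
split.
- move=> [b e] [b' e']; rewrite /fmul /fadj.
  under eq_bigr => p _ do rewrite Vm_cconj.
  rewrite sum_pair.
  under eq_bigr => g _ do rewrite /Vm /= (sumL_if e (fun _ => c2 * chis b g)
      (fun x => if x == e' then c2 * chis b' g else 0)).
  rewrite /fid xpair_eqE; case: (eqVneq e e') => [ee|ne]; last first.
    by rewrite andbF big1 // => g _; rewrite mulr0.
  subst e'; rewrite andbT.
  under eq_bigr => g _ do rewrite mulrACA.
  by rewrite -big_distrr /= chis_orth c2c2; case: eqP => _; rewrite ?mulr0 // mulVf // pnatr_eq0.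
- move=> [g x] [g' x']; rewrite /fmul /fadj.
  under eq_bigr => p _ do rewrite Vm_cconj.
  rewrite sum_pair.
  under eq_bigr => b _ do rewrite /Vm /= (sumL_if' x (fun _ => c2 * chis b g)
      (fun e => if x' == e then c2 * chis b g' else 0)).
  rewrite /fid xpair_eqE; case: (eqVneq x' x) => [ee|ne]; last first.
    by rewrite andbF big1 // => b _; rewrite mulr0.
  subst x'; rewrite andbT.
  under eq_bigr => b _ do rewrite mulrACA.
  by rewrite -big_distrr /= chis_sum2 c2c2; case: eqP => _; rewrite ?mulr0 // mulVf // pnatr_eq0.
Qed.

Local Notation E k x := (expi2pi (pairing k (dv x))).

Lemma fourier_entry (k : 'cV[R]_m) h d' g e :
  fourier_matrix W dv k (g, e) (h, d') = if (h * W d' e)%g == g then E k e else 0.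
Proof.
rewrite /fourier_matrix big_mkcond /=.
rewrite (eq_bigr (fun x => if x == e then (if (h * W d' e)%g == g then E k e else 0) else 0)) ?sum_delta //.
move=> x _; rewrite /spin_sub /= xpair_eqE.
by case: (eqVneq x e) => [->|ne]; rewrite ?andbT ?andbF //; case: ifP.
Qed.

Lemma Vm_diag (k : 'cV[R]_m) b e b' e' :
  fmul (fmul (fadj Vm) (fourier_matrix W dv k)) Vm (b, e) (b', e') =
  fdirect_sum (fun x => B_chi W dv (chis x) k) (b, e) (b', e').
Proof.
have inner : forall h d', \sum_p cconj (Vm p (b, e)) * fourier_matrix W dv k p (h, d')
    = c2 * chis b (h * W d' e)%g * E k e.
  move=> h d'; under eq_bigr => p _ do rewrite Vm_cconj.
  rewrite sum_pair.
  under eq_bigr => g _ do rewrite /Vm /= (sumL_if e (fun _ => c2 * chis b g)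
      (fun x => fourier_matrix W dv k (g, x) (h, d'))) fourier_entry.
  exact: sumR_if.
rewrite /fmul /fadj /fdirect_sum /B_chi /= sum_pair.
under eq_bigr => h _ do under eq_bigr => d' _ do rewrite inner.
under eq_bigr => h _ do rewrite /Vm /= (sumR_if' e' (fun _ => c2 * chis b' h)
      (fun d' => c2 * chis b (h * W d' e)%g * E k e)).
have hm := (chis_char b).2.
rewrite (eq_bigr (fun h => (c2 * c2 * (E k e * chis b (W e' e))) * (chis b h * chis b' h)));
  last by move=> h _; rewrite hm; ring.
rewrite -big_distrr /= chis_orth c2c2; case: eqP => _; last by rewrite mulr0.
by rewrite mulrAC mulVf ?mul1r // pnatr_eq0.
Qed.

End Part1.
End C.


Section G.
Local Open Scope classical_set_scope.
Variable R : realType.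
Local Notation C := (R[i]).

Lemma cnorm2 (z : C) : ((cnorm z ^+ 2)%:C)%C = z * cconj z.
Proof.
case: z => a b; rewrite /cnorm /= sqr_sqrtr ?addr_ge0 ?sqr_ge0 //.
apply/eqP; rewrite eq_complex /=; apply/andP; split; apply/eqP; ring.
Qed.


Lemma sumsqC {I : finType} (v : I -> C) :
  ((\sum_i cnorm (v i) ^+ 2)%:C)%C = \sum_i v i * cconj (v i).
Proof. by rewrite rmorph_sum; apply: eq_bigr => i _; apply: cnorm2. Qed.

Lemma sumsq_ge0 {I : finType} (v : I -> C) : 0 <= \sum_i cnorm (v i) ^+ 2.
Proof. by apply: sumr_ge0 => i _; rewrite sqr_ge0. Qed.

Lemma vnorm_sq {I : finType} (v : I -> C) : vnorm v ^+ 2 = \sum_i cnorm (v i) ^+ 2.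
Proof. by rewrite /vnorm sqr_sqrtr // sumsq_ge0. Qed.

Lemma rC_inj (x y : R) : (x%:C = y%:C :> C)%C -> x = y.
Proof. by case. Qed.

Lemma unitary_sumsq {I : finType} (U : I -> I -> C) (v : I -> C) : funitary U ->
  \sum_i cnorm (\sum_j U i j * v j) ^+ 2 = \sum_i cnorm (v i) ^+ 2.
Proof.
move=> [hU _]; apply: rC_inj; rewrite !sumsqC.
transitivity (\sum_j \sum_j' v j * cconj (v j') * fmul (fadj U) U j' j).
  rewrite /fmul /fadj.
  under eq_bigr => i _ do rewrite cconj_sum big_distrl /=.
  under eq_bigr => i _ do under eq_bigr => j _ do rewrite big_distrr /=.
  rewrite exchange_big; apply: eq_bigr => j _.
  rewrite exchange_big; apply: eq_bigr => j' _.
  rewrite big_distrr /=; apply: eq_bigr => i _; rewrite cconjM; ring.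
apply: eq_bigr => j _; under eq_bigr => j' _ do rewrite hU /fid.
by rewrite (bigD1 j) //= eqxx mulr1 big1 ?addr0 // => j' /negbTE ->; rewrite mulr0.
Qed.

Lemma scaled_sumsq {I : finType} (a : C) (w : I -> C) :
  \sum_i cnorm (a * w i) ^+ 2 = cnorm a ^+ 2 * \sum_i cnorm (w i) ^+ 2.
Proof.
apply: rC_inj; rewrite rmorphM /= !sumsqC cnorm2 big_distrr /=.
by apply: eq_bigr => i _; rewrite cconjM; ring.
Qed.

Lemma cnorm_real {r : R} : 0 <= r -> cnorm (r%:C)%C = r.
Proof. by move=> r0; rewrite /cnorm /= expr0n /= addr0 sqrtr_sqr ger0_norm. Qed.

Lemma opnorm_su {I : finType} (i0 : I) (r : R) (U : I -> I -> C) : 0 <= r -> funitary U ->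
  opnorm (fscale (r%:C)%C U) = r.
Proof.
move=> r0 hU.
have key : forall v : I -> C, vnorm v = 1 ->
    vnorm (fun i => \sum_j fscale (r%:C)%C U i j * v j) = r.
  move=> v hv; rewrite /vnorm /fscale.
  under eq_bigr => i _ do under eq_bigr => j _ do rewrite -mulrA.
  under eq_bigr => i _ do rewrite -big_distrr /=.
  rewrite scaled_sumsq unitary_sumsq // -vnorm_sq hv expr1n mulr1 cnorm_real //.
  by rewrite sqrtr_sqr ger0_norm.
rewrite /opnorm.
have -> : [set r0 : R | exists v : I -> C, vnorm v = 1 /\
    r0 = vnorm (fun i => \sum_j fscale (r%:C)%C U i j * v j)] = [set r].
  apply/seteqP; split => x /=.
    by move=> [v [hv ->]]; apply: key.
  move=> ->; exists (fun i => if i == i0 then 1 else 0).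
  have hv : vnorm (fun i : I => if i == i0 then (1 : C) else 0) = 1.
    rewrite /vnorm (bigD1 i0) //= eqxx big1 ?addr0.
      by rewrite (_ : cnorm 1 = 1) ?expr1n ?sqrtr1 //; exact: (cnorm_real ler01).
    by move=> i /negbTE ->; rewrite (_ : cnorm 0 = 0) ?expr0n //; exact: (cnorm_real (lexx 0)).
  by split => //; rewrite key.
exact: sup1.
Qed.


Lemma fmulA {I J K L : finType} (A : I -> J -> C) (B : J -> K -> C) (M : K -> L -> C) :
  fmul (fmul A B) M = fmul A (fmul B M).
Proof.
apply: funext => i; apply: funext => l; rewrite /fmul.
under eq_bigr => k _ do rewrite big_distrl /=.
rewrite exchange_big; apply: eq_bigr => j _; rewrite big_distrr /=.
by apply: eq_bigr => k _; rewrite mulrA.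
Qed.

Lemma fmul_scale {I J K : finType} (a b : C) (A : I -> J -> C) (B : J -> K -> C) :
  fmul (fscale a A) (fscale b B) = fscale (a * b) (fmul A B).
Proof.
apply: funext => i; apply: funext => k; rewrite /fmul /fscale big_distrr /=.
by apply: eq_bigr => j _; ring.
Qed.

Lemma fadj_mul {I J K : finType} (A : I -> J -> C) (B : J -> K -> C) :
  fadj (fmul A B) = fmul (fadj B) (fadj A).
Proof.
apply: funext => k; apply: funext => i; rewrite /fmul /fadj cconj_sum.
by apply: eq_bigr => j _; rewrite cconjM mulrC.
Qed.

Lemma fmul1 {I J : finType} (A : I -> J -> C) : fmul A (@fid R _) = A.
Proof.
apply: funext => i; apply: funext => j; rewrite /fmul /fid.
by rewrite (@sumR_if' R _ j (fun _ => 1) (A i)) mulr1.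
Qed.

Lemma fmul1l {I J : finType} (A : I -> J -> C) : fmul (@fid R _) A = A.
Proof.
apply: funext => i; apply: funext => j; rewrite /fmul /fid.
by rewrite (@sumL_if' R _ i (fun _ => 1) (fun j' => A j' j)) mul1r.
Qed.

Lemma funitaryE {I J : finType} (V : I -> J -> C) : funitary V ->
  fmul (fadj V) V = @fid R _ /\ fmul V (fadj V) = @fid R _.
Proof.
by move=> [h1 h2]; split; apply: funext => i; apply: funext => j; [apply: h1 | apply: h2].
Qed.

Lemma funitary_mul {I : finType} (X Y : I -> I -> C) :
  funitary X -> funitary Y -> funitary (fmul X Y).
Proof.
move=> /funitaryE [hX1 hX2] /funitaryE [hY1 hY2].
have h1 : fmul (fadj (fmul X Y)) (fmul X Y) = @fid R _.
  by rewrite fadj_mul fmulA -(fmulA (fadj X)) hX1 fmul1l hY1.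
have h2 : fmul (fmul X Y) (fadj (fmul X Y)) = @fid R _.
  by rewrite fadj_mul fmulA -(fmulA Y) hY2 fmul1l hX2.
by split => i j; rewrite ?h1 ?h2.
Qed.

Lemma funitary_fid {I : finType} : funitary (@fid R I).
Proof.
have h : fadj (@fid R I) = @fid R _.
  apply: funext => i; apply: funext => j; rewrite /fadj /fid eq_sym.
  by case: ifP; rewrite cconjE ?rmorph1 ?rmorph0.
by split => i j; rewrite h fmul1.
Qed.

End G.


Section P2.
Local Open Scope classical_set_scope.
Variable R : realType.
Local Notation C := (R[i]).

Lemma expi_unit (t : R) : expi2pi t * cconj (expi2pi t) = 1.
Proof.
rewrite -cnorm2 /cnorm /expi2pi /= cos2Dsin2 sqrtr1 expr1n //.
Qed.

Lemma expi_unit' (t : R) : cconj (expi2pi t) * expi2pi t = 1.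
Proof. by rewrite mulrC expi_unit. Qed.

Variables (gT : finGroupType) (D : finType) (W : D -> D -> gT) (m : nat)
  (dv : D -> 'cV[int]_m) (chi : gT -> C).

Local Notation N := (#|D|).
Local Notation cN := (((Num.sqrt (N%:R : R))^-1)%:C%C).

Lemma Bchi_unitary (k : 'cV[R]_m) : chi_unitary W chi ->
  funitary (fscale cN (B_chi W dv chi k)).
Proof.
move=> [hM1 hM2]; rewrite /fscale /B_chi.
set M := fun d d' : D => cN * chi (W d d') in hM1 hM2.
have eU : forall d d', cN * (expi2pi (pairing k (dv d)) * chi (W d' d)) =
    expi2pi (pairing k (dv d)) * M d' d by move=> d d'; rewrite /M; ring.
split => j j'; rewrite /fmul /fadj.
- under eq_bigr => d _ do rewrite !eU cconjM.
  rewrite fid_sym -(hM2 j' j) /fmul /fadj; apply: eq_bigr => d _.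
  set e := expi2pi _; have := expi_unit' (pairing k (dv d)); rewrite -/e => he.
  by rewrite mulrACA he mul1r mulrC.
- under eq_bigr => d _ do rewrite !eU cconjM.
  rewrite (eq_bigr (fun d => (expi2pi (pairing k (dv j)) * cconj (expi2pi (pairing k (dv j'))))
     * (cconj (M d j') * M d j))); last by move=> d _; ring.
  have h := hM1 j' j; rewrite /fmul /fadj in h.
  rewrite -big_distrr /= h /fid eq_sym.
  case: eqP => [->|_]; last by rewrite mulr0.
  by rewrite expi_unit mulr1.
Qed.


Lemma cocycle_su (Q : 'M[int]_m) (A U : 'cV[R]_m -> D -> D -> C) (sc : R) :
  (forall k, funitary (U k)) -> (forall k, A k = fscale (sc%:C)%C (U k)) ->
  forall n k, exists Un, funitary Un /\ cocycle Q A n k = fscale ((sc ^+ n)%:C)%C Un.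
Proof.
move=> hU hA; elim=> [|n IH] k /=.
  exists (@fid R D); split; first exact: funitary_fid.
  by apply: funext => i; apply: funext => j; rewrite /fscale expr0 rmorph1 mul1r.
have [Un [hUn ->]] := IH (QTact Q k).
exists (fmul (U k) Un); split; first exact: funitary_mul.
by rewrite hA fmul_scale exprS rmorphM.
Qed.

Lemma lyap_su (Q : 'M[int]_m) (A U : 'cV[R]_m -> D -> D -> C) (sc : R) (i0 : D) :
  0 < sc -> (forall k, funitary (U k)) -> (forall k, A k = fscale (sc%:C)%C (U k)) ->
  forall k, lyapunov Q A k = (ln sc)%:E.
Proof.
move=> sc0 hU hA k; rewrite /lyapunov.
apply: (cvg_limn_einf_sup _).2; apply: cvg_near_cst.
near=> n.
have n0 : (0 < n)%N by near: n; exists 1%N.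
have [Un [hUn ->]] := @cocycle_su Q A U sc hU hA n k.
rewrite (@opnorm_su R D i0) ?exprn_ge0 ?ltW // lnXn // -[ln sc *+ n]mulr_natr mulrCA mulVf ?mulr1 //.
by rewrite pnatr_eq0 -lt0n.
Unshelve. all: by end_near.
Qed.

End P2.

Theorem proposition4p16 (R : realType) (m : nat) (Q : 'M[int]_m)
  (D : finType) (dv : D -> 'cV[int]_m) (gT : finGroupType) (W : D -> D -> gT) :
  (0 < m)%N ->
  expansive R Q ->
  complete_residues Q dv ->
  #|gT| = 2%N ->                       (* qubit: G has two elements *)
  primitive_sub W ->
  aperiodic_sub W Q dv ->
  (exists (X : finType) (chis : X -> gT -> R[i]),
     (forall x, is_character (chis x)) /\
     injective chis /\
     (forall chi : gT -> R[i], is_character chi -> exists x, chis x = chi) /\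
     exists V : spin_letter gT D -> (X * D)%type -> R[i],
       funitary V /\
       forall (k : 'cV[R]_m) (p q : (X * D)%type),
         fmul (fmul (fadj V) (fourier_matrix W dv k)) V p q =
         fdirect_sum (fun x => B_chi W dv (chis x) k) p q)
  /\
  (forall chi : gT -> R[i], is_character chi -> chi_unitary W chi ->
     (forall k : 'cV[R]_m, exists U : D -> D -> R[i],
        funitary U /\
        B_chi W dv chi k = fscale ((Num.sqrt (`|\det Q|%:~R : R))%:C)%C U) /\
     (forall k : 'cV[R]_m,
        lyapunov Q (B_chi W dv chi) k = (ln (Num.sqrt (`|\det Q|%:~R : R)))%:E)).
Proof.
move=> m0 hexp hres h2 hprim haper.
have cardD := @card_residues m Q D dv hres.
have [s [hs1 [hg hss]]] := two_elem gT h2.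
have [d0 _] := hres.1 0.
split.
  exists bool, (chis R gT); split; first exact: (chis_char R gT s hs1 hg hss).
  split; first exact: (chis_inj R gT s hs1).
  split; first exact: (chis_surj R gT s hs1 hg hss).
  exists (Vm R gT D); split; first exact: (Vm_unitary R gT s hs1 hg D).
  move=> k [b e] [b' e']; exact: (Vm_diag R gT s hs1 hg hss).
move=> chi hchi hcu.
have eN : (`|\det Q|%:~R : R) = #|D|%:R by rewrite -abszE -cardD.
rewrite eN.
have N0 : (0 < #|D|)%N by apply/card_gt0P; exists d0.
have sN0 : 0 < Num.sqrt (#|D|%:R : R) by rewrite sqrtr_gt0 ltr0n.
have hB : forall k, B_chi W dv chi k = fscale ((Num.sqrt (#|D|%:R : R))%:C)%C
    (fscale (((Num.sqrt (#|D|%:R : R))^-1)%:C)%C (B_chi W dv chi k)).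
  move=> k; apply: funext => i; apply: funext => j; rewrite /fscale mulrA -rmorphM.
  by rewrite mulfV ?rmorph1 ?mul1r // gt_eqF.
split.
  move=> k; exists (fscale (((Num.sqrt (#|D|%:R : R))^-1)%:C)%C (B_chi W dv chi k)).
  split; [exact: (Bchi_unitary R gT D W m dv chi k hcu) | exact: hB].
move=> k; apply: (lyap_su R D m Q _ (fun k => fscale (((Num.sqrt (#|D|%:R : R))^-1)%:C)%C (B_chi W dv chi k)) _ d0 sN0 _ hB k).
by move=> k'; apply: (Bchi_unitary R gT D W m dv chi k' hcu).
Qed.
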